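(* Let $q_1,q_2,v$ be indeterminates and fix integers $1\le i<j$. Then $$\big\langle q_1^{\lambda_i}q_2^{\lambda_j}\big\rangle_v=\frac{(v)_\infty}{(v)_{i-1}\,(v^iq_1)_{j-i}\,(v^jq_1q_2)_\infty}=\frac{(v)_\infty}{(vq_1q_2)_\infty}\cdot\frac{(vq_1)_{i-1}\,(vq_1q_2)_{j-1}}{(v)_{i-1}\,(vq_1)_{j-1}}.$$
   Context: Notation: $(a)_0=1$, $(a)_r=\prod_{k=0}^{r-1}(1-av^k)$ for $r\ge1$, $(a)_\infty=\prod_{k\ge0}(1-av^k)$. For a function $f$ on the set $\mathcal P$ of partitions, $\langle f\rangle_v:=(v)_\infty\sum_{\lambda\in\mathcal P}f(\lambda)v^{|\lambda|}$, as a formal power series in $v$. Here $\lambda=(\lambda_1,\lambda_2,\ldots)$ with $\lambda_k=0$ for $k$ beyond the length of $\lambda$, and $\langle q_1^{\lambda_i}q_2^{\lambda_j}\rangle_v$ denotes $\langle f\rangle_v$ for $f(\lambda)=q_1^{\lambda_i}q_2^{\lambda_j}$. *)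

(* Defs.v *)
(* Formal power series in v over a commutative ring R are
   represented by their coefficient sequences  nat -> R. *)
From mathcomp Require Import all_boot all_order all_algebra.
Set Implicit Arguments. Unset Strict Implicit. Unset Printing Implicit Defensive.
Import Order.TTheory GRing.Theory Num.Theory.
Local Open Scope ring_scope.

Section FPS.
Variable R : comNzRingType.

Local Notation fps := (nat -> R).

Definition fmul (f g : fps) : fps :=
  fun n => \sum_(k < n.+1) f k * g (n - k)%N.

(* multiplicative inverse of a series with constant term 1:
   g 0 = 1, g n = - sum_{k<n} f (n-k) g k   *)
Fixpoint invl (f : fps) (n : nat) : seq R :=
  match n with
  | 0 => [:: 1]
  | n'.+1 => let s := invl f n' in
             rcons s (- \sum_(k < n'.+1) f (n'.+1 - k)%N * s`_k)
  end.
Definition fps_inv (f : fps) : fps := fun n => (invl f n)`_n.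

(* finite q-Pochhammer (a)_r with a = c v^m :
   prod_{k<r} (1 - c v^(m+k)) *)
Definition pochP (c : R) (m r : nat) : {poly R} :=
  \prod_(k < r) (1 - c *: 'X^(m + k)).
Definition poch (c : R) (m r : nat) : fps := fun n => (pochP c m r)`_n.

(* infinite q-Pochhammer (a)_oo with a = c v^m, m >= 1: the coefficient of
   v^n only depends on the first n+1 factors. *)
Definition pochinf (c : R) (m : nat) : fps := fun n => (pochP c m n.+1)`_n.

(* Partitions of n are encoded as nonincreasing functions
   'I_n -> 'I_n.+1 (parts lambda_1 >= ... >= lambda_n >= 0, padded with
   zeros) with sum n; this is a bijection with the partitions of n. *)
Definition parts_seq n (f : {ffun 'I_n -> 'I_n.+1}) : seq nat :=
  [seq nat_of_ord (f x) | x <- enum 'I_n].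
Definition is_partition n (f : {ffun 'I_n -> 'I_n.+1}) : bool :=
  sorted geq (parts_seq f) && (sumn (parts_seq f) == n).
(* lambda_k (1-indexed), with lambda_k = 0 beyond the length *)
Definition lam n (f : {ffun 'I_n -> 'I_n.+1}) (k : nat) : nat :=
  nth 0%N (parts_seq f) k.-1.

Definition genser (F : (nat -> nat) -> R) : fps :=
  fun n => \sum_(f : {ffun 'I_n -> 'I_n.+1} | is_partition f) F (lam f).

(* < F >_v = (v)_oo * sum_lambda F(lambda) v^|lambda| *)
Definition bracket (F : (nat -> nat) -> R) : fps :=
  fmul (pochinf 1 1) (genser F).

End FPS.

(* Main.v *)
Require Import Defs.
From mathcomp Require Import all_boot all_order all_algebra.
From mathcomp Require Import zify.
From Stdlib Require Import FunctionalExtensionality.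
Import GRing.Theory.
Local Open Scope ring_scope.

Section Alg.
Variable R : comNzRingType.
Local Notation fps := (nat -> R).
Implicit Types f g h : fps.
Definition fe : fps := fun n => (n == 0)%:R.

Lemma fmul_coef (f g : fps) (p q : {poly R}) k :
  (forall m, (m <= k)%N -> f m = p`_m) ->
  (forall m, (m <= k)%N -> g m = q`_m) -> fmul f g k = (p * q)`_k.
Proof.
move=> Hf Hg; rewrite coefM /fmul; apply: eq_bigr => [[m]] /= Hm _.
by rewrite Hf ?Hg // ?leq_subr // -ltnS.
Qed.

Definition trp (f : fps) n : {poly R} := \poly_(i < n.+1) f i.
Lemma trpE f n m : (m <= n)%N -> f m = (trp f n)`_m.
Proof. by move=> H; rewrite coef_poly ltnS H. Qed.

Lemma fmul_trp f g n m : (m <= n)%N -> fmul f g m = (trp f n * trp g n)`_m.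
Proof.
move=> H; apply: fmul_coef => k Hk; apply: trpE; exact: leq_trans Hk H.
Qed.

Lemma fmulC f g : fmul f g = fmul g f.
Proof.
apply: functional_extensionality => n.
by rewrite (@fmul_trp f g n n (leqnn n)) (@fmul_trp g f n n (leqnn n)) mulrC.
Qed.

Lemma fmulA f g h : fmul f (fmul g h) = fmul (fmul f g) h.
Proof.
apply: functional_extensionality => n.
rewrite (@fmul_coef f (fmul g h) (trp f n) (trp g n * trp h n)); last first.
- by move=> m Hm; apply: fmul_trp.
- by move=> m Hm; apply: trpE.
rewrite (@fmul_coef (fmul f g) h (trp f n * trp g n) (trp h n)).
- by rewrite mulrA.
- by move=> m Hm; apply: fmul_trp.
- by move=> m Hm; apply: trpE.
Qed.

Lemma fmul1 f : fmul fe f = f.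
Proof.
apply: functional_extensionality => n.
rewrite (@fmul_coef fe f 1 (trp f n)) ?mul1r; first by rewrite -trpE.
- by move=> m _; rewrite coef1.
- by move=> m Hm; apply: trpE.
Qed.

Lemma fmulCA f g h : fmul f (fmul g h) = fmul g (fmul f h).
Proof. by rewrite fmulA (fmulC f g) -fmulA. Qed.

Lemma fmul0 f g : fmul f g 0%N = f 0%N * g 0%N.
Proof. by rewrite /fmul big_ord1. Qed.

Lemma size_invl f n : size (invl f n) = n.+1.
Proof. by elim: n => //= n IH; rewrite size_rcons IH. Qed.

Lemma invl_stable f n m k : (k <= n)%N -> (n <= m)%N -> (invl f m)`_k = (invl f n)`_k.
Proof.
move=> Hk; elim: m => [|m IH]; first by rewrite leqn0 => /eqP ->.
rewrite leq_eqVlt => /orP [/eqP -> //|]; rewrite ltnS => Hnm.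
by rewrite /= nth_rcons size_invl ltnS (leq_trans Hk Hnm) IH.
Qed.

Lemma fps_invS f n : fps_inv f n.+1 =
  - \sum_(k < n.+1) f (n.+1 - k)%N * fps_inv f k.
Proof.
rewrite /fps_inv /= nth_rcons size_invl ltnn eqxx; congr (- _).
apply: eq_bigr => [[k Hk]] _ /=; congr (_ * _).
by apply: invl_stable; rewrite // -ltnS.
Qed.

Lemma fps_inv0 f : fps_inv f 0%N = 1.
Proof. by []. Qed.

Lemma fmul_inv f : f 0%N = 1 -> fmul f (fps_inv f) = fe.
Proof.
move=> H1; rewrite fmulC; apply: functional_extensionality => [[|n]].
  by rewrite fmul0 fps_inv0 H1 mulr1.
rewrite /fmul big_ord_recr /= subnn H1 mulr1 fps_invS /fe /=.
rewrite [X in X - _](_ : _ = \sum_(k < n.+1) f (n.+1 - k)%N * fps_inv f k).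
  by rewrite subrr.
by apply: eq_bigr => k _; rewrite mulrC.
Qed.

Lemma inv_uniq f g h : fmul f g = fe -> fmul f h = fe -> g = h.
Proof.
move=> Hg Hh.
by rewrite -[g]fmul1 -Hh (fmulC f h) -fmulA Hg fmulC fmul1.
Qed.

Lemma inv_fmul f g : f 0%N = 1 -> g 0%N = 1 ->
  fps_inv (fmul f g) = fmul (fps_inv f) (fps_inv g).
Proof.
move=> Hf Hg; symmetry; apply: (@inv_uniq (fmul f g)).
  by rewrite -fmulA (fmulCA g) (@fmul_inv g Hg) (fmulC _ fe) fmul1 fmul_inv.
by apply: fmul_inv; rewrite fmul0 Hf Hg mulr1.
Qed.

End Alg.

Section PolyL.
Variable R : comNzRingType.

Lemma coef_mul1sub (p : {poly R}) a s m : (m < s)%N ->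
  (p * (1 - a *: 'X^s))`_m = p`_m.
Proof.
move=> H; rewrite mulrBr mulr1 coefB -scalerAr coefZ coefMXn H mulr0 subr0 //.
Qed.

Lemma coef_mulprod (p : {poly R}) r (a : nat -> R) (s : nat -> nat) m :
  (forall k, (k < r)%N -> (m < s k)%N) ->
  (p * \prod_(k < r) (1 - a k *: 'X^(s k)))`_m = p`_m.
Proof.
elim: r => [|r IH] H; first by rewrite big_ord0 mulr1.
rewrite big_ord_recr /= mulrA coef_mul1sub ?IH //.
  by move=> k Hk; apply: H; apply: ltnW.
exact: H.
Qed.

Lemma poch_stab_le (c : R) s r r' m : (r <= r')%N -> (m < s + r)%N ->
  (pochP c s r')`_m = (pochP c s r)`_m.
Proof.
move=> Hr Hm; rewrite /pochP -(subnKC Hr) big_split_ord /=.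
rewrite (@coef_mulprod _ _ (fun _ => c) (fun k => s + (r + k))%N) //.
by move=> k _; apply: (leq_trans Hm); rewrite leq_add2l leq_addr.
Qed.

Lemma poch_stab (c : R) s r r' m : (m < s + minn r r')%N ->
  (pochP c s r')`_m = (pochP c s r)`_m.
Proof.
case: (leqP r r') => H Hm.
  by apply: poch_stab_le => //; move: Hm; rewrite (minn_idPl H).
symmetry; apply: poch_stab_le; first exact: ltnW.
by [].
Qed.

Lemma pochP0 (c : R) s r : (0 < s)%N -> (pochP c s r)`_0 = 1.
Proof.
move=> Hs; rewrite -[pochP c s r]mul1r /pochP.
rewrite (@coef_mulprod _ _ (fun _ => c) (fun k => s + k)%N) ?coef1 //.
by move=> k _; rewrite (leq_trans Hs) ?leq_addr.
Qed.

Lemma pochinfE (c : R) s n N : (n < N)%N -> pochinf c s n = (pochP c s N)`_n.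
Proof.
move=> H; rewrite /pochinf (@poch_stab c s n.+1 N n) //.
by rewrite (minn_idPl H) addnS ltnS leq_addl.
Qed.

Lemma poch_split (c : R) s a b :
  pochP c s (a + b) = pochP c s a * pochP c (s + a) b.
Proof.
rewrite /pochP big_split_ord /=; congr (_ * _).
by apply: eq_bigr => k _; rewrite addnA.
Qed.

End PolyL.
Set Implicit Arguments.

Definition mono (b : nat -> nat) := forall m, (b m.+1 <= b m)%N.

Lemma mono_le b m m' : mono b -> (m <= m')%N -> (b m' <= b m)%N.
Proof.
move=> Hb; elim: m' => [|m' IH]; first by rewrite leqn0 => /eqP ->.
rewrite leq_eqVlt => /orP [/eqP -> //|]; rewrite ltnS => H.
exact: leq_trans (Hb m') (IH H).
Qed.

Lemma tele b N m : mono b -> (m <= N)%N ->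
  (\sum_(l < N) (m <= l) * (b l - b l.+1) = b m - b N)%N.
Proof.
move=> Hb; elim: N => [|N IH]; first by rewrite leqn0 => /eqP ->; rewrite big_ord0 subnn.
rewrite leq_eqVlt => /orP [/eqP ->|].
  rewrite subnn big1 // => l _; rewrite leqNgt ltnS (leq_ord l) mul0n //.
rewrite ltnS => H; rewrite big_ord_recr /= IH // H mul1n.
have h1 := Hb N; have h2 := @mono_le b m N Hb H; lia.
Qed.

Lemma T2 b N : mono b ->
  (\sum_(l < N) l.+1 * (b l - b l.+1) + N * b N = \sum_(l < N) b l)%N.
Proof.
move=> Hb; elim: N => [|N IH]; first by rewrite !big_ord0.
rewrite !big_ord_recr /= -IH.
have h1 := Hb N; by rewrite -addnA -mulnDr subnK // mulSn [(b N + _)%N]addnC addnA.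
Qed.

Section Comb.
Variables (k N D' : nat).
Hypotheses (HkN : (k <= N)%N) (HkD : (k <= D')%N).
Local Notation PT := {ffun 'I_k -> 'I_k.+1}.
Local Notation DT := {ffun 'I_N -> 'I_D'.+1}.

Definition av (f : PT) m := nth 0%N (parts_seq f) m.

Lemma av_ord f (m : 'I_k) : av f m = f m.
Proof.
rewrite /av /parts_seq (nth_map m) ?size_enum_ord //.
by congr (nat_of_ord (f _)); apply: val_inj; rewrite /= nth_enum_ord.
Qed.

Lemma av_ge f m : (k <= m)%N -> av f m = 0%N.
Proof. by move=> H; rewrite /av nth_default // size_map size_enum_ord. Qed.

Lemma av_le f m : (av f m <= k)%N.
Proof.
case: (ltnP m k) => H; last by rewrite av_ge.
by rewrite (av_ord f (Ordinal H)) -ltnS.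
Qed.

Definition toD (f : PT) : DT := [ffun l : 'I_N => inord (av f l - av f l.+1)].

Lemma toDE f l : nat_of_ord (toD f l) = (av f l - av f l.+1)%N.
Proof.
rewrite ffunE inordK // ltnS; apply: leq_trans (leq_subr _ _) _.
exact: leq_trans (av_le _ _) HkD.
Qed.

Definition Sd (d : DT) m := (\sum_(l < N) (m <= l) * d l)%N.
Definition wt (d : DT) := (\sum_(l < N) l.+1 * d l)%N.
Definition toL (d : DT) : PT := [ffun m : 'I_k => inord (Sd d m)].

Lemma S_le_w d m : (Sd d m <= wt d)%N.
Proof. by apply: leq_sum => l _; apply: leq_mul => //; case: (m <= l)%N. Qed.

Lemma toLE d m : wt d = k -> nat_of_ord (toL d m) = Sd d m.
Proof. by move=> Hw; rewrite ffunE inordK // ltnS (leq_trans (S_le_w d m)) // Hw. Qed.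

Lemma d0 d (l : 'I_N) : wt d = k -> (k <= l)%N -> nat_of_ord (d l) = 0%N.
Proof.
move=> Hw Hl; have : (l.+1 * d l <= wt d)%N.
  by rewrite /wt (bigD1 l) //= leq_addr.
rewrite Hw; case: (nat_of_ord (d l)) => // x H; exfalso.
have : (l.+1 <= k)%N by apply: leq_trans H; rewrite leq_pmulr.
by rewrite ltnNge Hl.
Qed.

Lemma S0 d m : wt d = k -> (k <= m)%N -> Sd d m = 0%N.
Proof.
move=> Hw Hm; apply: big1 => l _; case: (leqP m l) => H; last by rewrite mul0n.
by rewrite d0 ?muln0 // (leq_trans Hm H).
Qed.

Lemma av_toL d m : wt d = k -> av (toL d) m = Sd d m.
Proof.
move=> Hw; case: (ltnP m k) => H; last by rewrite av_ge // S0.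
by rewrite (av_ord _ (Ordinal H)) toLE.
Qed.

Lemma S_step d (l : 'I_N) : Sd d l = (d l + Sd d l.+1)%N.
Proof.
rewrite /Sd (bigD1 l) // [in RHS](bigD1 l) //= leqnn ltnn mul1n mul0n add0n.
congr (_ + _)%N; apply: eq_bigr => t Ht.
have Ht2 : (nat_of_ord l == nat_of_ord t) = false by rewrite eq_sym; exact: negbTE Ht.
by rewrite leq_eqVlt Ht2.
Qed.

Lemma toDL d : wt d = k -> toD (toL d) = d.
Proof.
move=> Hw; apply/ffunP => l; apply: val_inj.
by rewrite /= toDE !av_toL // S_step addnK.
Qed.

Lemma sumn_parts f : sumn (parts_seq f) = (\sum_(m < k) av f m)%N.
Proof.
rewrite sumnE /parts_seq big_map big_enum /=.
by apply: eq_bigr => m _; rewrite av_ord.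
Qed.

Lemma sorted_mono f : sorted geq (parts_seq f) <-> mono (av f).
Proof.
split.
  move=> /(sortedP 0%N) Hs m; case: (ltnP m.+1 k) => H.
    by apply: Hs; rewrite size_map size_enum_ord.
  by rewrite av_ge.
move=> Hm; apply/(sortedP 0%N) => m _; exact: Hm.
Qed.

Lemma wD f : mono (av f) -> wt (toD f) = (\sum_(m < k) av f m)%N.
Proof.
move=> Hm; have := @T2 (av f) N Hm; rewrite (@av_ge f N HkN) muln0 addn0 => HT.
rewrite /wt (eq_bigr (fun l : 'I_N => l.+1 * (av f l - av f l.+1)))%N; last first.
  by move=> l _; rewrite toDE.
rewrite HT (@big_ord_widen _ 0%N addn k N (av f) HkN) [RHS]big_mkcond /=.
by apply: eq_bigr => l _; case: ltnP => // H; rewrite av_ge.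
Qed.

Lemma SD f m : mono (av f) -> (m <= N)%N -> Sd (toD f) m = av f m.
Proof.
move=> Hm HmN; rewrite /Sd (eq_bigr (fun l : 'I_N => (m <= l) * (av f l - av f l.+1)))%N.
  by rewrite tele // (@av_ge f N HkN) subn0.
by move=> l _; rewrite toDE.
Qed.

Lemma S_mono d : mono (Sd d).
Proof.
move=> m; apply: leq_sum => l _; apply: leq_mul => //.
by case: (ltnP m l) => // /ltnW ->.
Qed.

Lemma part_iff f : is_partition f = (wt (toD f) == k) && (toL (toD f) == f).
Proof.
apply/andP/andP => [[Hs Hsum]|[/eqP Hw /eqP HL]].
  have Hm := (iffLR (sorted_mono f) Hs).
  split; first by rewrite wD // -sumn_parts.
  apply/eqP/ffunP => m; apply: val_inj.
  have HmN : (m <= N)%N by apply: ltnW; apply: leq_trans (ltn_ord m) HkN.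
  by rewrite /= ffunE SD // inordK ?av_ord // ltnS av_le.
have Ha : forall m, av f m = Sd (toD f) m.
  move=> m; case: (ltnP m k) => H; last by rewrite av_ge // S0.
  by rewrite (av_ord _ (Ordinal H)) -{1}HL toLE.
have Hm : mono (av f) by move=> m; rewrite !Ha; apply: S_mono.
apply/andP; rewrite (iffRL (sorted_mono f) Hm) /= sumn_parts -wD // Hw //.
Qed.

End Comb.
Set Implicit Arguments.

Section Main.
Variables (R : comNzRingType) (q1 q2 : R) (i j : nat).
Hypotheses (Hi : (1 <= i)%N) (Hij : (i < j)%N).

Definition cf l : R := q1 ^+ (i.-1 <= l)%N * q2 ^+ (j.-1 <= l)%N.

Lemma prodZX (I : Type) (r : seq I) (a : I -> R) (b : I -> nat) :
  \prod_(x <- r) (a x *: 'X^(b x)) = (\prod_(x <- r) a x) *: 'X^(\sum_(x <- r) b x).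
Proof.
elim: r => [|x r IH]; first by rewrite !big_nil scale1r.
by rewrite !big_cons IH -scalerAl -scalerAr scalerA exprD.
Qed.

Lemma Gcoef N D' k :
  (\prod_(l < N) \sum_(e < D'.+1) (cf l *: 'X^(l.+1)) ^+ e)`_k =
  \sum_(d : {ffun 'I_N -> 'I_D'.+1} | wt d == k) \prod_(l < N) cf l ^+ d l.
Proof.
rewrite bigA_distr_bigA /= coef_sum [RHS]big_mkcond; apply: eq_bigr => d _.
rewrite (eq_bigr (fun l : 'I_N => cf l ^+ d l *: 'X^(l.+1 * d l))); last first.
  by move=> l _; rewrite exprZn exprM.
rewrite prodZX coefZ coefXn /wt eq_sym; case: eqP => _; by rewrite ?mulr1 ?mulr0.
Qed.

Definition Fw := fun lam : nat -> nat => q1 ^+ lam i * q2 ^+ lam j.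

Lemma genserE N D' k : (k <= N)%N -> (k <= D')%N -> (i.-1 <= N)%N -> (j.-1 <= N)%N ->
  genser Fw k = (\prod_(l < N) \sum_(e < D'.+1) (cf l *: 'X^(l.+1)) ^+ e)`_k.
Proof.
move=> HkN HkD HiN HjN.
rewrite Gcoef (reindex_onto (@toD k N D') (@toL k N D')); last first.
  by move=> d /eqP; apply: toDL.
rewrite /genser; apply: eq_big => f; first by rewrite (part_iff N D' HkN HkD).
move=> Hp; move/andP: Hp => [Hs _]; have Hm := iffLR (sorted_mono f) Hs.
rewrite /cf; under eq_bigr do rewrite exprMn -!exprM.
rewrite big_split /= !prodrXr.
have E1 := SD N D' HkN HkD i.-1 Hm HiN; have E2 := SD N D' HkN HkD j.-1 Hm HjN.
rewrite /Sd in E1 E2; rewrite E1 E2 /Fw /lam //.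
Qed.


Lemma Qsplit L : pochP 1 1 i.-1 * (pochP q1 i (j - i) * pochP (q1 * q2) j L) =
  \prod_(l < i.-1 + (j - i + L)) (1 - cf l *: 'X^(l.+1)).
Proof.
rewrite big_split_ord big_split_ord /pochP; congr (_ * (_ * _)); apply: eq_bigr => l _ /=.
- have h1 : (i.-1 <= l)%N = false by apply/negbTE; rewrite -ltnNge.
  have h2 : (j.-1 <= l)%N = false.
    by apply/negbTE; rewrite -ltnNge (leq_trans (ltn_ord l)) //; lia.
  by rewrite /cf h1 h2 !expr0 mulr1 add1n.
- have h1 : (i.-1 <= i.-1 + l)%N = true by rewrite leq_addr.
  have h2 : (j.-1 <= i.-1 + l)%N = false.
    by apply/negbTE; rewrite -ltnNge; have := ltn_ord l; lia.
  have h3 : (i + l = (i.-1 + l).+1)%N by lia.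
  by rewrite /cf h1 h2 expr1 expr0 mulr1 h3.
- have h1 : (i.-1 <= i.-1 + (j - i + l))%N = true by rewrite leq_addr.
  have h2 : (j.-1 <= i.-1 + (j - i + l))%N = true by apply/idP; lia.
  have h3 : (j + l = (i.-1 + (j - i + l)).+1)%N by lia.
  by rewrite /cf h1 h2 !expr1 h3.
Qed.

Lemma geo (x : {poly R}) D : (1 - x) * \sum_(e < D) x ^+ e = 1 - x ^+ D.
Proof. by rewrite -opprB mulNr -subrX1 opprB. Qed.

Definition Pser := fmul (poch 1 1 i.-1) (fmul (poch q1 i (j - i)) (pochinf (q1 * q2) j)).

Lemma core n : fmul Pser (genser Fw) n = fe R n.
Proof.
pose N := (i.-1 + (j - i + n.+1))%N.
rewrite (@fmul_coef _ Pser (genser Fw)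
   (\prod_(l < N) (1 - cf l *: 'X^(l.+1)))
   (\prod_(l < N) \sum_(e < n.+1) (cf l *: 'X^(l.+1)) ^+ e) n).
- rewrite -big_split /=.
  rewrite (eq_bigr (fun l : 'I_N => 1 - (cf l ^+ n.+1) *: 'X^(l.+1 * n.+1))); last first.
    by move=> l _; rewrite geo exprZn exprM.
  rewrite -(mul1r (\prod_(l < N) _)).
  rewrite (@coef_mulprod _ _ _ (fun l => cf l ^+ n.+1) (fun l => l.+1 * n.+1)%N) ?coef1 //.
  by move=> l _; rewrite mulSn (leq_trans (ltnSn n)) ?leq_addr.
- move=> m Hm; rewrite /Pser -Qsplit; apply: fmul_coef => [t _|t Ht]; first by [].
  apply: fmul_coef => [t' _|t' Ht']; first by [].
  apply: pochinfE; rewrite ltnS; exact: leq_trans Ht' (leq_trans Ht Hm).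
- move=> m Hm; apply: genserE => //; rewrite /N; lia.
Qed.

End Main.

Unset Implicit Arguments.

Theorem lemma3p4 (R : comNzRingType) (q1 q2 : R) (i j : nat) :
  (1 <= i)%N -> (i < j)%N ->
  (forall n : nat,
     bracket (fun lam => q1 ^+ lam i * q2 ^+ lam j) n =
     fmul (pochinf 1 1)
          (fps_inv (fmul (poch 1 1 i.-1)
                      (fmul (poch q1 i (j - i)) (pochinf (q1 * q2) j)))) n)
  /\
  (forall n : nat,
     bracket (fun lam => q1 ^+ lam i * q2 ^+ lam j) n =
     fmul (fmul (pochinf 1 1) (fps_inv (pochinf (q1 * q2) 1)))
          (fmul (fmul (poch q1 1 i.-1) (poch (q1 * q2) 1 j.-1))
                (fps_inv (fmul (poch 1 1 i.-1) (poch q1 1 j.-1)))) n).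
Proof.
move=> Hi Hij.
have Hp0 : forall (c : R) s r, (0 < s)%N -> poch c s r 0%N = 1.
  by move=> c s r Hs; rewrite /poch pochP0.
have Hpi0 : forall (c : R) s, (0 < s)%N -> pochinf c s 0%N = 1.
  by move=> c s Hs; rewrite /pochinf pochP0.
have Hj : (0 < j)%N by apply: leq_ltn_trans Hij.
have HP0 : Pser R q1 q2 i j 0%N = 1.
  by rewrite /Pser !fmul0 !Hp0 ?Hpi0 ?mulr1.
have HG : genser (Fw R q1 q2 i j) = fps_inv (Pser R q1 q2 i j).
  apply: (@inv_uniq _ (Pser R q1 q2 i j)); last exact: fmul_inv.
  by apply: functional_extensionality => n; apply: core.
have Hb : bracket (fun lam => q1 ^+ lam i * q2 ^+ lam j) =
          fmul (pochinf 1 1) (fps_inv (Pser R q1 q2 i j)).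
  by rewrite /bracket -HG.
split; first by move=> n; rewrite Hb.
move=> n; rewrite Hb; congr (_ n); clear n.
set A := pochinf 1 1.
set C := poch q1 1 i.-1.
set Dd := poch (q1 * q2) 1 j.-1.
set E := poch 1 1 i.-1.
set Pq := poch q1 i (j - i).
set Pinf := pochinf (q1 * q2) j.
have HB : pochinf (q1 * q2) 1 = fmul Dd Pinf.
  apply: functional_extensionality => n.
  rewrite (@pochinfE _ _ 1 n (j.-1 + n.+1)); last by lia.
  rewrite poch_split.
  rewrite (@fmul_coef _ Dd Pinf (pochP (q1 * q2) 1 j.-1) (pochP (q1 * q2) (1 + j.-1) n.+1) n) //.
  move=> m Hm; rewrite /Pinf (@pochinfE _ _ j m n.+1) //; first by rewrite add1n prednK.
have HF : poch q1 1 j.-1 = fmul C Pq.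
  apply: functional_extensionality => n.
  have -> : j.-1 = (i.-1 + (j - i))%N by lia.
  rewrite /poch poch_split add1n prednK //.
  by rewrite (@fmul_coef _ C Pq (pochP q1 1 i.-1) (pochP q1 i (j - i)) n).
have HC0 : C 0%N = 1 by apply: Hp0.
have HD0 : Dd 0%N = 1 by apply: Hp0.
have HE0 : E 0%N = 1 by apply: Hp0.
have HPq0 : Pq 0%N = 1 by apply: Hp0.
have HPi0 : Pinf 0%N = 1 by apply: Hpi0.
rewrite HB HF /Pser -/E -/Pq -/Pinf.
rewrite !inv_fmul // ?fmul0 ?HC0 ?HPq0 ?HPi0 ?mulr1 //.
set iC := fps_inv C; set iD := fps_inv Dd; set iE := fps_inv E; set iPq := fps_inv Pq; set iPi := fps_inv Pinf.
rewrite -!fmulA; congr (fmul A _).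
rewrite (fmulCA _ C Dd) (fmulCA _ iPi Dd) (fmulA _ iD) (fmulC _ iD Dd) fmul_inv // fmul1.
rewrite (fmulCA _ iE iC) (fmulA _ C iC) fmul_inv // fmul1.
by rewrite (fmulC _ iPi) -fmulA.
Qed.
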